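(* Consider the Group Lasso: $\mathbf X\in\mathbb R^{n\times p}$, coefficients partitioned into $G$ groups with fixed weights $w_g>0$, $\widehat{\boldsymbol\beta}=\arg\min_{\boldsymbol\beta}\tfrac12\|\mathbf y-\mathbf X\boldsymbol\beta\|_2^2+\gamma\sum_g w_g\|\boldsymbol\beta_g\|_2$, $\gamma\in(\gamma_l,\gamma_{l+1})$ for consecutive transition points, and $\widehat{df}_\gamma=\mathrm{trace}[(\mathbf I_n+\gamma\mathbf B)^{-1}\mathbf A]$ with $\mathbf A=\mathbf X_{\mathcal A_G}(\mathbf X_{\mathcal A_G}^\top\mathbf X_{\mathcal A_G})^{-1}\mathbf X_{\mathcal A_G}^\top$ and $\mathbf B=\mathbf X_{\mathcal A_G}(\mathbf X_{\mathcal A_G}^\top\mathbf X_{\mathcal A_G})^{-1}\boldsymbol\Pi_{\mathcal A_G}(\mathbf X_{\mathcal A_G}^\top\mathbf X_{\mathcal A_G})^{-1}\mathbf X_{\mathcal A_G}^\top$ (for $\mathbf X^\top\mathbf X=\mathbf I_p$ these reduce to $\mathbf X_{\mathcal A_G}\mathbf X_{\mathcal A_G}^\top$ and $\mathbf X_{\mathcal A_G}\boldsymbol\Pi_{\mathcal A_G}\mathbf X_{\mathcal A_G}^\top$). If every group has cardinality $n_g=1$, then $\widehat{df}_\gamma=|\mathcal A|$, the number of nonzero coefficients of $\widehat{\boldsymbol\beta}$.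
   Context: $\boldsymbol\beta_g,\widehat{\boldsymbol\beta}_g\in\mathbb R^{n_g}$ are group subvectors; $\mathcal A_G=\{g:\|\widehat{\boldsymbol\beta}_g\|_2\ne0\}$ the active groups; $\mathcal A=\{j:\widehat\beta_j\ne0\}$; $\mathbf X_{\mathcal A_G}$ the columns of $\mathbf X$ in active groups, with invertible Gram matrix; $\boldsymbol\Pi_{\mathcal A_G}=\mathrm{blockdiag}_{g\in\mathcal A_G}\big(w_g[\mathbf I_{n_g}/\|\widehat{\boldsymbol\beta}_g\|_2-\widehat{\boldsymbol\beta}_g\widehat{\boldsymbol\beta}_g^\top/\|\widehat{\boldsymbol\beta}_g\|_2^3]\big)$. Transition points are the values of $\gamma>0$ at which the active set changes. *)

(* Defs.v *)
From HB Require Import structures.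
From mathcomp Require Import all_boot all_order all_algebra.
From mathcomp Require Import reals.
Set Implicit Arguments. Unset Strict Implicit. Unset Printing Implicit Defensive.
Import Order.TTheory GRing.Theory Num.Theory.
Local Open Scope ring_scope.

Section GroupLasso.
Variables (R : realType) (n p G : nat).
Variable (X : 'M[R]_(n, p)) (y : 'cV[R]_n).
Variable (grp : 'I_p -> 'I_G) (w : 'I_G -> R).

Definition gnorm (b : 'cV[R]_p) (g : 'I_G) : R :=
  Num.sqrt (\sum_(j < p | grp j == g) (b j 0) ^+ 2).

Definition glasso_obj (gamma : R) (b : 'cV[R]_p) : R :=
  2^-1 * (\sum_(i < n) ((y - X *m b) i 0) ^+ 2)
  + gamma * \sum_(g < G) w g * gnorm b g.

Definition is_glasso_solution (gamma : R) (b : 'cV[R]_p) : Prop :=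
  forall b' : 'cV[R]_p, glasso_obj gamma b <= glasso_obj gamma b'.

Definition active_groups (b : 'cV[R]_p) : {set 'I_G} :=
  [set g | gnorm b g != 0].

Definition active_cols (b : 'cV[R]_p) : {set 'I_p} :=
  [set j | grp j \in active_groups b].

Definition active_coefs (b : 'cV[R]_p) : {set 'I_p} :=
  [set j | b j 0 != 0].

Definition XA (b : 'cV[R]_p) : 'M[R]_(n, #|active_cols b|) :=
  \matrix_(i < n, k < #|active_cols b|) X i (enum_val k).

Definition gramA (b : 'cV[R]_p) : 'M[R]_(#|active_cols b|) :=
  (XA b)^T *m XA b.

(* Pi_{A_G}: block-diagonal over active groups, the block of group g being
   w_g [ I / ||b_g|| - b_g b_g^T / ||b_g||^3 ]  (indexed in the order of
   enumeration of the active columns). *)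
Definition PiA (b : 'cV[R]_p) : 'M[R]_(#|active_cols b|) :=
  \matrix_(k < #|active_cols b|, l < #|active_cols b|)
    let j := enum_val k in let j' := enum_val l in
    if grp j == grp j' then
      w (grp j) * ((j == j')%:R / gnorm b (grp j)
                   - b j 0 * b j' 0 / (gnorm b (grp j)) ^+ 3)
    else 0.

Definition Amat (b : 'cV[R]_p) : 'M[R]_n :=
  XA b *m invmx (gramA b) *m (XA b)^T.

Definition Bmat (b : 'cV[R]_p) : 'M[R]_n :=
  XA b *m invmx (gramA b) *m PiA b *m invmx (gramA b) *m (XA b)^T.

Definition df_hat (gamma : R) (b : 'cV[R]_p) : R :=
  \tr (invmx (1%:M + gamma *: Bmat b) *m Amat b).

(* gamma is strictly between two consecutive transition points of the
   solution path: the active set is constant on a neighbourhood of gamma. *)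
Definition not_transition_point (path : R -> 'cV[R]_p) (gamma : R) : Prop :=
  exists2 eps : R, 0 < eps &
    forall gamma' : R, 0 < gamma' -> `|gamma' - gamma| < eps ->
      active_groups (path gamma') = active_groups (path gamma).

End GroupLasso.

(* Main.v *)
Require Import Defs.
From HB Require Import structures.
From mathcomp Require Import all_boot all_order all_algebra.
From mathcomp Require Import reals.
Import Order.TTheory GRing.Theory Num.Theory.
Local Open Scope ring_scope.

Theorem corollaryS4 (R : realType) (n p G : nat)
    (X : 'M[R]_(n, p)) (y : 'cV[R]_n)
    (grp : 'I_p -> 'I_G) (w : 'I_G -> R)
    (path : R -> 'cV[R]_p) (gamma : R) :
  (forall g : 'I_G, 0 < w g) ->
  (forall gamma' : R, 0 < gamma' ->
     is_glasso_solution X y grp w gamma' (path gamma')) ->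
  0 < gamma ->
  not_transition_point grp path gamma ->
  gramA X grp (path gamma) \in unitmx ->
  (forall g : 'I_G, #|[set j : 'I_p | grp j == g]| = 1%N) ->
  df_hat X grp w gamma (path gamma) = (#|active_coefs (path gamma)|)%:R.
Proof.
move=> _ _ _ _ Hu Hcard.
set b := path gamma.
have inj : forall j j', grp j == grp j' -> j = j'.
  move=> j j' /eqP e.
  have [x Hx] : exists x, [set j0 | grp j0 == grp j'] = [set x].
    by apply/cards1P; rewrite Hcard.
  have h1 : j \in [set j0 | grp j0 == grp j'] by rewrite inE e.
  have h2 : j' \in [set j0 | grp j0 == grp j'] by rewrite inE.
  by move: h1 h2; rewrite Hx !inE => /eqP -> /eqP ->.
have gn : forall j, Defs.gnorm grp b (grp j) = `|b j 0|.
  move=> j; rewrite /Defs.gnorm (big_pred1 j); first by rewrite sqrtr_sqr.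
  move=> j0 /=; apply/idP/idP; first by move/inj => ->.
  by move/eqP ->.
have Pi0 : PiA grp w b = 0.
  apply/matrixP => k l; rewrite /PiA !mxE /=.
  case: ifP => // /inj e; rewrite -e eqxx gn.
  have : enum_val k \in active_cols grp b by apply: enum_valP.
  rewrite !inE gn normr_eq0 -normr_eq0 => nz.
  have -> : b (enum_val k) 0 * b (enum_val k) 0 = `|b (enum_val k) 0| ^+ 2.
    by rewrite real_normK ?num_real // expr2.
  rewrite mul1r; apply/eqP; rewrite mulf_eq0; apply/orP; right.
  by rewrite subr_eq0 (exprSr _ 2) invfM mulrA mulfV ?mul1r ?expf_neq0.
have -> : active_coefs b = active_cols grp b.
  by apply/setP => j; rewrite !inE gn normr_eq0.
rewrite /df_hat /Bmat Pi0 mulmx0 mul0mx mul0mx scaler0 addr0 invmx1 mul1mx.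
rewrite /Amat mxtrace_mulC mulmxA -/(gramA X grp b) mulmxV // mxtrace1 //.
Qed.
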